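(* For every $n\ge 0$, the derivation $u_{\delta_{2n}}$ belongs to $\mathfrak{krv}$, where $\delta_{2n}=\Theta(x\otimes\operatorname{ad}_y^{\,2n}(x))$.
   Context: $A=\mathbb{R}\langle x,y\rangle$; $L\subset A$ the free Lie algebra on $x,y$; $\operatorname{ad}_y(l)=[y,l]$. $\operatorname{tr}$ is the projection $A\to A/\operatorname{span}\{ab-ba\}$. $F(L)$ is the quotient of $L\otimes L$ by the span of $a\otimes b-b\otimes a$ and $a\otimes[b,c]-[a,b]\otimes c$, with projection $\Theta$, regarded inside $A/\operatorname{span}\{ab-ba\}$ via $\Theta(a\otimes b)\mapsto\operatorname{tr}(ab)$. For $x_0\in\{x,y\}$, $\partial_{x_0}$ maps cyclic words by $\operatorname{tr}(a_1\cdots a_n)\mapsto\sum_{i:\,a_i=x_0}a_{i+1}\cdots a_n a_1\cdots a_{i-1}$. For $\Gamma\in F(L)$, $u_\Gamma$ is the derivation of $L$ with $u_\Gamma(x)=\partial_y\Gamma$, $u_\Gamma(y)=-\partial_x\Gamma$. For $l\in A$, $\partial^L_{x_0}(l)=\sum\partial^1\,\epsilon(\partial^2)\in A$, where $\sum\partial^1\otimes\partial^2$ is the sum over occurrences of $x_0$ in monomials of (prefix)$\otimes$(suffix) and $\epsilon$ is the constant term. $\operatorname{div}(u)=\operatorname{tr}(\partial^L_x(u(x))+\partial^L_y(u(y)))$, and $\mathfrak{krv}=\{u\in\operatorname{Der}(L):u([x,y])=0,\ \operatorname{div}(u)=0\}$. *)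

(* Defs.v *)
From Stdlib Require Import Rdefinitions.
From mathcomp Require Import all_boot all_order all_algebra.
From mathcomp Require Import Rstruct.

Set Implicit Arguments.
Unset Strict Implicit.
Unset Printing Implicit Defensive.
Import GRing.Theory Num.Theory.
Local Open Scope ring_scope.

Definition lx : bool := false.
Definition ly : bool := true.

(* The free associative algebra R<x,y>: an element is its coefficient function on
   words (we only ever use finitely supported ones; see [is_poly]). *)
Definition A := seq bool -> R.

Definition A0 : A := fun _ => 0.
Definition addA (p q : A) : A := fun w => p w + q w.
Definition oppA (p : A) : A := fun w => - p w.
Definition scaleA (c : R) (p : A) : A := fun w => c * p w.
Definition mulA (p q : A) : A :=
  fun w => \sum_(i < (size w).+1) p (take i w) * q (drop i w).
Definition letter (c : bool) : A := fun w => (w == [:: c])%:R.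
Definition X : A := letter lx.
Definition Y : A := letter ly.

Definition is_poly (p : A) : Prop :=
  exists s : seq (seq bool), forall w, w \notin s -> p w = 0.

Definition brA (p q : A) : A := addA (mulA p q) (oppA (mulA q p)).
Definition ady (p : A) : A := brA Y p.

(* The free Lie algebra L on x,y inside A: the smallest subspace containing x, y
   and closed under commutators (closed under extensional equality of
   coefficient functions). *)
Inductive inL : A -> Prop :=
  | L_x : inL X
  | L_y : inL Y
  | L_add p q : inL p -> inL q -> inL (addA p q)
  | L_scale c p : inL p -> inL (scaleA c p)
  | L_br p q : inL p -> inL q -> inL (brA p q)
  | L_ext p q : inL p -> (forall w, p w = q w) -> inL q.

(* tr p = 0 in A/span{ab - ba}: p is a finite sum of commutators of elements of A *)
Definition tr_eq0 (p : A) : Prop :=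
  exists s : seq (A * A),
    (forall i : nat, (i < size s)%N ->
        is_poly (nth (A0, A0) s i).1 /\ is_poly (nth (A0, A0) s i).2) /\
    is_poly p /\
    forall w, p w = \sum_(i < size s) brA (nth (A0, A0) s i).1 (nth (A0, A0) s i).2 w.

(* cyclic derivative: on a representative p of tr(p),
   d_c tr(a_1...a_n) = sum_{i : a_i = c} a_{i+1}...a_n a_1...a_{i-1}.
   Coefficient of v: sum over splittings v = a ++ b of p(b ++ c :: a). *)
Definition cder (c : bool) (p : A) : A :=
  fun v => \sum_(i < (size v).+1) p (drop i v ++ c :: take i v).

Definition dL (c : bool) (p : A) : A := fun v => p (rcons v c).

(* The derivation of A with x |-> ux, y |-> uy:
   a c b |-> a (u c) b; coefficient of w sums over w = a ++ v ++ b. *)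
Definition der_ext (ux uy : A) (p : A) : A :=
  fun w => \sum_(i < (size w).+1) \sum_(j < (size w - i).+1) \sum_(c : bool)
     p (take i w ++ c :: drop (i + j) w) * (if c then uy else ux) (take j (drop i w)).

Definition uGx (g : A) : A := cder ly g.
Definition uGy (g : A) : A := oppA (cder lx g).

Definition divA (ux uy : A) : A := addA (dL lx ux) (dL ly uy).

Definition in_krv (ux uy : A) : Prop :=
  [/\ inL ux, inL uy,
      (forall w, der_ext ux uy (brA X Y) w = 0) &
      tr_eq0 (divA ux uy)].

(* delta_{2n} = Theta(x (x) ad_y^{2n}(x)), viewed as tr(x ad_y^{2n}(x)) *)
Definition delta (n : nat) : A := mulA X (iter (2 * n) ady X).

(* Main.v *)
Require Import Defs.
From mathcomp Require Import all_boot all_order all_algebra.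
From mathcomp Require Import Rstruct ring lra zify.
From Stdlib Require Import Rdefinitions FunctionalExtensionality.
Set Implicit Arguments. Unset Strict Implicit. Unset Printing Implicit Defensive.
Import GRing.Theory Num.Theory.
Local Open Scope ring_scope.
Local Notation mulA := Defs.mulA.
Local Notation addA := Defs.addA.
Local Notation oppA := Defs.oppA.
Local Notation scaleA := Defs.scaleA.

Lemma mulA_letter_l c p w : mulA (letter c) p w =
  if w is d :: w' then (d == c)%:R * p w' else 0.
Proof.
case: w => [|d w]; rewrite /mulA /=.
  by rewrite big_ord_recl big_ord0 /letter /= mul0r addr0.
rewrite big_ord_recl /= {1}/letter /= mul0r add0r.
rewrite big_ord_recl /= {1}/letter /= add0n take0 drop0 eqseq_cons andbT.
rewrite big1 ?addr0 // => i _.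
rewrite /letter /= eqseq_cons add0n.
case: w i => [|e w] i /=; first by case: i.
by rewrite andbF mul0r.
Qed.

Lemma mulA_letter_r0 c p : mulA p (letter c) [::] = 0.
Proof. by rewrite /mulA big_ord_recl big_ord0 /letter /= mulr0 addr0. Qed.

Lemma mulA_letter_r c p w d : mulA p (letter c) (rcons w d) = (d == c)%:R * p w.
Proof.
rewrite /mulA size_rcons big_ord_recr /= drop_oversize ?size_rcons //.
rewrite {2}/letter /= mulr0 addr0 big_ord_recr /=.
rewrite -cats1 takel_cat // take_size drop_cat ltnn subnn drop0.
rewrite big1 ?add0r; first by rewrite /letter /= eqseq_cons andbT mulrC.
move=> [i hi] _ /=; rewrite drop_cat hi /letter.
have -> : (drop i w ++ [:: d] == [:: c]) = false.
  apply/negbTE/eqP => /(congr1 size); rewrite size_cat size_drop /=.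
  by rewrite addn1 => -[] /eqP; rewrite subn_eq0 leqNgt hi.
by rewrite mulr0.
Qed.

Lemma mulA_letter_r' c p w : mulA p (letter c) w =
  if w is d :: w' then (last d w' == c)%:R * p (belast d w') else 0.
Proof. by case: w => [|d w]; rewrite ?mulA_letter_r0 // lastI mulA_letter_r. Qed.

Lemma ady_eq p w : ady p w =
  (if w is d :: w' then (d == true)%:R * p w' else 0) -
  (if w is d :: w' then (last d w' == true)%:R * p (belast d w') else 0).
Proof. by rewrite /ady /brA /addA /oppA /Y mulA_letter_l mulA_letter_r'. Qed.

Lemma L1 c p q : mulA (letter c) (mulA p q) = mulA (mulA (letter c) p) q.
Proof.
apply: functional_extensionality => w.
set F := mulA (letter c) p.
rewrite mulA_letter_l; case: w => [|d w].
  by rewrite /mulA big_ord_recl big_ord0 /= /F mulA_letter_l mul0r addr0.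
rewrite /mulA [in RHS]big_ord_recl {1}/F mulA_letter_l mul0r add0r mulr_sumr.
by apply: eq_bigr => i _; rewrite /F mulA_letter_l /= mulrA.
Qed.

Lemma L2 c p q : mulA (mulA p q) (letter c) = mulA p (mulA q (letter c)).
Proof.
apply: functional_extensionality => w.
set F := mulA q (letter c).
case: (lastP w) => [|w' d].
  by rewrite mulA_letter_r0 /mulA big_ord_recl big_ord0 /F mulA_letter_r0 mulr0 addr0.
rewrite mulA_letter_r /mulA size_rcons [in RHS]big_ord_recr /= drop_oversize ?size_rcons //.
rewrite {2}/F mulA_letter_r0 mulr0 addr0 mulr_sumr; apply: eq_bigr => [[i hi]] _ /=.
rewrite drop_rcons // /F mulA_letter_r -cats1 takel_cat //.
by rewrite mulrCA.
Qed.

Lemma L4 c p q : mulA p (mulA (letter c) q) = mulA (mulA p (letter c)) q.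
Proof.
apply: functional_extensionality => w.
set F := mulA (letter c) q. set G := mulA p (letter c).
rewrite /mulA big_ord_recr big_ord_recl /= drop_size /F mulA_letter_l mulr0 addr0.
rewrite take0 /G mulA_letter_r0 mul0r add0r; apply: eq_bigr => [[i hi]] _ /=.
rewrite (drop_nth true hi) (take_nth true hi) mulA_letter_l mulA_letter_r.
by rewrite mulrCA mulrA.
Qed.

Lemma mulA_addl p q r : mulA (addA p q) r = addA (mulA p r) (mulA q r).
Proof.
apply: functional_extensionality => w; rewrite /mulA /addA -big_split /=.
by apply: eq_bigr => i _; rewrite mulrDl.
Qed.
Lemma mulA_addr p q r : mulA r (addA p q) = addA (mulA r p) (mulA r q).
Proof.
apply: functional_extensionality => w; rewrite /mulA /addA -big_split /=.
by apply: eq_bigr => i _; rewrite mulrDr.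
Qed.
Lemma mulA_oppl p r : mulA (oppA p) r = oppA (mulA p r).
Proof.
apply: functional_extensionality => w; rewrite /mulA /oppA -sumrN.
by apply: eq_bigr => i _; rewrite mulNr.
Qed.
Lemma mulA_oppr p r : mulA r (oppA p) = oppA (mulA r p).
Proof.
apply: functional_extensionality => w; rewrite /mulA /oppA -sumrN.
by apply: eq_bigr => i _; rewrite mulrN.
Qed.
Lemma mulA_scalel c p r : mulA (scaleA c p) r = scaleA c (mulA p r).
Proof.
apply: functional_extensionality => w; rewrite /mulA /scaleA mulr_sumr.
by apply: eq_bigr => i _; rewrite mulrA.
Qed.
Lemma mulA_scaler c p r : mulA r (scaleA c p) = scaleA c (mulA r p).
Proof.
apply: functional_extensionality => w; rewrite /mulA /scaleA mulr_sumr.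
by apply: eq_bigr => i _; rewrite mulrCA.
Qed.

Lemma ady_br p q : ady (brA p q) = addA (brA (ady p) q) (brA p (ady q)).
Proof.
rewrite /ady /brA /Y.
rewrite !(mulA_addl, mulA_addr, mulA_oppl, mulA_oppr).
rewrite !L1 !L2 !L4.
apply: functional_extensionality => w; rewrite /addA /oppA.
ring.
Qed.


Definition yn k := nseq k true.
Definition w1 a b := yn a ++ false :: yn b.
Definition w2 a b c := w1 a b ++ false :: yn c.

Lemma cnt_yn k : count_mem false (yn k) = 0%nat.
Proof. by rewrite /yn count_nseq. Qed.
Lemma cnt_w1 a b : count_mem false (w1 a b) = 1%nat.
Proof. by rewrite /w1 count_cat /= !cnt_yn. Qed.
Lemma cnt_w2 a b c : count_mem false (w2 a b c) = 2%nat.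
Proof. by rewrite /w2 count_cat cnt_w1 /= cnt_yn. Qed.
Lemma size_w1 a b : size (w1 a b) = (a + b).+1.
Proof. by rewrite /w1 size_cat /= !size_nseq addnS. Qed.
Lemma size_w2 a b c : size (w2 a b c) = (a + b + c).+2.
Proof. by rewrite /w2 size_cat size_w1 /= size_nseq !addnS. Qed.

Lemma dec0 w : count_mem false w = 0%nat -> w = yn (size w).
Proof.
elim: w => [|[] w IH] //= h; first by rewrite {1}IH.
Qed.

Lemma dec1 w : count_mem false w = 1%nat -> exists a b, w = w1 a b.
Proof.
elim: w => [|[] w IH] //= h.
  by have [a [b ->]] := IH h; exists a.+1, b.
have h' : count_mem false w = 0%nat by case: h.
by exists 0%nat, (size w); rewrite {1}(dec0 h').
Qed.

Lemma dec2 w : count_mem false w = 2%nat -> exists a b c, w = w2 a b c.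
Proof.
elim: w => [|[] w IH] //= h.
  by have [a [b [c ->]]] := IH h; exists a.+1, b, c.
have h' : count_mem false w = 1%nat by case: h.
have [b [c ->]] := dec1 h'.
by exists 0%nat, b, c.
Qed.

Lemma yn_rcons k : yn k.+1 = rcons (yn k) true.
Proof. by elim: k => //= k ->. Qed.
Lemma w1_rS a b : w1 a b.+1 = rcons (w1 a b) true.
Proof. by rewrite /w1 yn_rcons -rcons_cons rcons_cat. Qed.
Lemma w1_r0 a : w1 a 0 = rcons (yn a) false.
Proof. by rewrite /w1 cats1. Qed.
Lemma w2_rS a b c : w2 a b c.+1 = rcons (w2 a b c) true.
Proof. by rewrite /w2 yn_rcons -rcons_cons rcons_cat. Qed.
Lemma w2_r0 a b : w2 a b 0 = rcons (w1 a b) false.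
Proof. by rewrite /w2 cats1. Qed.

Lemma nth_w1 a b i : nth true (w1 a b) i = (i != a).
Proof.
rewrite /w1 nth_cat size_nseq nth_nseq.
case: (ltngtP i a) => h.
- by [].
- case E: (subn i a) => [|k] /=; first by lia.
  by rewrite nth_nseq; case: ifP.
- by rewrite h subnn.
Qed.

Lemma nth_w2 a b c i : nth true (w2 a b c) i = (i != a) && (i != (a + b).+1).
Proof.
rewrite /w2 nth_cat size_w1 nth_w1.
case: (ltngtP i (a + b).+1) => h.
- by rewrite andbT.
- case E: (subn i (a + b).+1) => [|k] /=; first by lia.
  rewrite nth_nseq; case: ifP => _; apply/esym/andP; split; apply/eqP; lia.
- by rewrite h subnn /= andbF.
Qed.

Definition Hp (p : A) w := if w is d :: w' then (d == true)%:R * p w' else 0.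
Definition Tp (p : A) w :=
  if w is d :: w' then (last d w' == true)%:R * p (belast d w') else 0.
Lemma Tp_rcons p w d : Tp p (rcons w d) = (d == true)%:R * p w.
Proof. by case: w => [|e w] //=; rewrite last_rcons belast_rcons. Qed.
Lemma Tp_nil p : Tp p [::] = 0. Proof. by []. Qed.
Lemma ady_HT p w : ady p w = Hp p w - Tp p w.
Proof. by rewrite ady_eq. Qed.

Definition P m := iter m ady X.
Definition Pc m a b : R := if (a + b == m)%nat then (-1)^+b * ('C(m,b))%:R else 0.

Lemma Pc_rec m a b : Pc m.+1 a b =
  (if a is a'.+1 then Pc m a' b else 0) - (if b is b'.+1 then Pc m a b' else 0).
Proof.
rewrite /Pc; case: a => [|a]; case: b => [|b].
- by rewrite subr0.
- rewrite !add0n eqSS sub0r; case: eqP => [->|_]; last by rewrite oppr0.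
  by rewrite !binn exprS mulN1r mulNr.
- by rewrite !addn0 eqSS subr0 !bin0.
- rewrite addSn addnS !eqSS addSn; case: eqP => _; last by rewrite subr0.
  by rewrite binS natrD exprS mulrDr !mulN1r mulNr; ring.
Qed.

Lemma cnt_cons d w : count_mem false (d :: w) = ((d == false) + count_mem false w)%nat.
Proof. by []. Qed.

Lemma P_spec m : (forall w, count_mem false w != 1%nat -> P m w = 0) /\
                 (forall a b, P m (w1 a b) = Pc m a b).
Proof.
elim: m => [|m [IH0 IH1]].
  split.
    move=> w hw; rewrite /P /= /X /letter; case: eqP => // E.
    by move: hw; rewrite E.
  move=> a b; rewrite /P /= /X /letter /Pc.
  case: a => [|a]; case: b => [|b] //=.
  by rewrite expr0 mul1r bin0.
split.
  move=> w hw; rewrite /P /= -/(P m) ady_HT.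
  case: w hw => [|d w] hw; first by rewrite /= subr0.
  rewrite /Hp /Tp.
  have -> : (d == true)%:R * P m w = 0.
    case: d hw => /= hw; last by rewrite mul0r.
    by rewrite IH0 ?mulr0 // -(add0n (count _ _)).
  have -> : (last d w == true)%:R * P m (belast d w) = 0.
    move: hw; rewrite lastI -cats1 count_cat /=.
    case: (last d w) => /= hw; last by rewrite mul0r.
    by rewrite IH0 ?mulr0 // -(addn0 (count _ _)).
  by rewrite subr0.
move=> a b; rewrite /P /= -/(P m) ady_HT Pc_rec; congr (_ - _).
  by case: a => [|a] //=; rewrite ?IH1 ?mul0r ?mul1r.
case: b => [|b].
  by rewrite w1_r0 Tp_rcons mul0r.
by rewrite w1_rS Tp_rcons IH1 mul1r.
Qed.

Lemma P_cnt m w : count_mem false w != 1%nat -> P m w = 0.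
Proof. by case: (P_spec m) => h _; apply: h. Qed.
Lemma P_w1 m a b : P m (w1 a b) = Pc m a b.
Proof. by case: (P_spec m) => _ h; apply: h. Qed.

Definition dlt m := mulA X (P m).
Lemma dlt_eq m w : dlt m w = if w is d :: w' then (d == false)%:R * P m w' else 0.
Proof. by rewrite /dlt /X mulA_letter_l. Qed.

Lemma dlt_cnt m w : count_mem false w != 2%nat -> dlt m w = 0.
Proof.
rewrite dlt_eq; case: w => [|[] w] //= h; first by rewrite mul0r.
by rewrite P_cnt ?mulr0 // -(add1n (count _ _)).
Qed.

Lemma cder_rot c m v : cder c (dlt m) v =
  \sum_(i < size v) (nth true v i == false)%:R * P m (drop i.+1 v ++ c :: take i v)
  + (c == false)%:R * P m v.
Proof.
rewrite /cder big_ord_recr /= drop_size take_size /= dlt_eq; congr (_ + _).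
by apply: eq_bigr => [[i hi]] _ /=; rewrite (drop_nth true hi) /= dlt_eq.
Qed.

Lemma cder_cnt c m v : (count_mem false v + (c == false))%nat != 2%nat ->
  cder c (dlt m) v = 0.
Proof.
move=> h; rewrite /cder big1 // => i _; apply: dlt_cnt.
have E := count_cat (pred1 false) (take i v) (drop i v).
rewrite cat_take_drop in E.
rewrite count_cat /=; move: h; rewrite E.
by case: (c == false); rewrite /= ?add0n ?add1n ?addnS ?addn1 ?addn0 addnC.
Qed.

Lemma Pc_sym m a b : ~~ odd m -> Pc m a b = Pc m b a.
Proof.
move=> hm; rewrite /Pc addnC; case: eqP => // E.
have ha : a = (m - b)%nat by lia.
have hb : (b <= m)%nat by lia.
rewrite ha bin_sub // -signr_odd -[in RHS]signr_odd -ha.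
congr (_ ^+ _ * _).
move: hm; rewrite -E oddD; by case: (odd a); case: (odd b).
Qed.

Lemma size_yn k : size (yn k) = k.
Proof. exact: size_nseq. Qed.

Lemma drop_w1 a b : drop a.+1 (w1 a b) = yn b.
Proof. by rewrite /w1 drop_cat size_yn ltnNge leqnSn /= subSnn /= drop0. Qed.
Lemma take_w1 a b : take a (w1 a b) = yn a.
Proof. by rewrite /w1 take_size_cat // size_yn. Qed.
Lemma drop_w2a a b c : drop a.+1 (w2 a b c) = yn b ++ false :: yn c.
Proof. by rewrite /w2 /w1 -catA drop_cat size_yn ltnNge leqnSn /= subSnn /= drop0. Qed.
Lemma take_w2a a b c : take a (w2 a b c) = yn a.
Proof. by rewrite /w2 /w1 -catA take_size_cat // size_yn. Qed.
Lemma drop_w2b a b c : drop (a + b).+2 (w2 a b c) = yn c.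
Proof. by rewrite /w2 drop_cat size_w1 ltnNge leqnSn /= subSnn /= drop0. Qed.
Lemma take_w2b a b c : take (a + b).+1 (w2 a b c) = w1 a b.
Proof. by rewrite /w2 take_size_cat // size_w1. Qed.

Lemma cderx_w1 m a b : cder false (dlt m) (w1 a b) = Pc m b a + Pc m a b.
Proof.
rewrite cder_rot P_w1 mul1r; congr (_ + _).
have ha : (a < size (w1 a b))%nat by rewrite size_w1 ltnS leq_addr.
rewrite (bigD1 (Ordinal ha)) //= big1 ?addr0.
  by rewrite nth_w1 eqxx /= mul1r drop_w1 take_w1 -/(w1 b a) P_w1.
move=> [i hi] /= hne; rewrite nth_w1.
have hia : i != a := hne.
by rewrite hia mul0r.
Qed.

Lemma yn_cat c a : yn c ++ true :: yn a = yn (c + a.+1).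
Proof. by rewrite /yn nseqD. Qed.

Lemma cdery_w2 m a b c : cder true (dlt m) (w2 a b c) =
  Pc m b (c + a.+1) + Pc m (c + a.+1) b.
Proof.
rewrite cder_rot /= mul0r addr0.
have ha : (a < size (w2 a b c))%nat by rewrite size_w2; lia.
have hb : ((a + b).+1 < size (w2 a b c))%nat by rewrite size_w2; lia.
rewrite (bigD1 (Ordinal ha)) //= (bigD1 (Ordinal hb)) /=; last first.
  by apply/negP => /eqP [] /eqP; lia.
rewrite big1 ?addr0.
  rewrite !nth_w2 eqxx /= mul1r.
  have -> : ((a + b).+1 != a) = true by apply/negP => /eqP; lia.
  rewrite eqxx /= mul1r drop_w2a take_w2a drop_w2b take_w2b.
  rewrite -catA /= yn_cat -/(w1 b (c + a.+1)) P_w1.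
  by rewrite /w1 -cat_cons catA yn_cat -/(w1 (c + a.+1) b) P_w1.
move=> [i hi] /= /andP [hne1 hne2]; rewrite nth_w2.
have h1 : i != a := hne1.
have h2 : i != (a + b).+1 := hne2.
by rewrite h1 h2 mul0r.
Qed.

Lemma cx_eq m : ~~ odd m -> cder false (dlt m) = scaleA 2%:R (P m).
Proof.
move=> hm; apply: functional_extensionality => v; rewrite /scaleA.
case: (eqVneq (count_mem false v) 1%nat) => h.
  have [a [b ->]] := dec1 h.
  by rewrite cderx_w1 P_w1 (Pc_sym _ _ hm) mulr2n mulrDl mul1r.
by rewrite cder_cnt ?P_cnt ?mulr0 //= addn1; apply: contra h => /eqP [] ->.
Qed.

Lemma V_cnt m v : count_mem false v != 2%nat -> cder true (dlt m) v = 0.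
Proof. by move=> h; rewrite cder_cnt //= addn0. Qed.

Lemma V_w2 m a b c : ~~ odd m ->
  cder true (dlt m) (w2 a b c) = 2%:R * Pc m (c + a.+1) b.
Proof. by move=> hm; rewrite cdery_w2 (Pc_sym _ _ hm) mulr2n mulrDl mul1r. Qed.

Lemma cnt_rcons w d : count_mem false (rcons w d) = (count_mem false w + (d == false))%nat.
Proof. by rewrite -cats1 count_cat /= addn0. Qed.

Lemma Hp_cnt (p : A) k w : (forall u, count_mem false u != k -> p u = 0) ->
  count_mem false w != k -> Hp p w = 0.
Proof.
move=> hp; case: w => [|[] w] //= h; last by rewrite mul0r.
by rewrite hp ?mulr0 // -(add0n (count _ _)).
Qed.
Lemma Tp_cnt (p : A) k w : (forall u, count_mem false u != k -> p u = 0) ->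
  count_mem false w != k -> Tp p w = 0.
Proof.
move=> hp; case: (lastP w) => [|w' [|]] //; rewrite Tp_rcons cnt_rcons /= ?mul0r //.
by move=> h; rewrite hp ?mulr0 // -(addn0 (count _ _)).
Qed.
Lemma XL_cnt (p : A) k w : (forall u, count_mem false u != k -> p u = 0) ->
  count_mem false w != k.+1 -> mulA X p w = 0.
Proof.
move=> hp; rewrite /X mulA_letter_l; case: w => [|[] w] //= h; first by rewrite mul0r.
by rewrite hp ?mulr0 //; apply: contra h => /eqP ->.
Qed.
Lemma XR_cnt (p : A) k w : (forall u, count_mem false u != k -> p u = 0) ->
  count_mem false w != k.+1 -> mulA p X w = 0.
Proof.
move=> hp; case: (lastP w) => [|w' d]; first by rewrite /X mulA_letter_r0.
rewrite /X mulA_letter_r cnt_rcons; case: d => /= h; first by rewrite mul0r.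
by rewrite hp ?mulr0 //; apply: contra h => /eqP ->; rewrite addn1.
Qed.

Lemma AV m : ~~ odd m ->
  ady (cder true (dlt m)) = scaleA 2%:R (brA (P m) X).
Proof.
move=> hm; apply: functional_extensionality => w.
rewrite ady_HT /scaleA /brA /addA /oppA.
case: (eqVneq (count_mem false w) 2%nat) => h; last first.
  rewrite (Hp_cnt (V_cnt m) h) (Tp_cnt (V_cnt m) h).
  rewrite (XL_cnt (@P_cnt m) h) (XR_cnt (@P_cnt m) h).
  by rewrite !subrr mulr0.
have [a [b [c ->]]] := dec2 h.
have -> : Hp (cder true (dlt m)) (w2 a b c) =
    if a is a'.+1 then 2%:R * Pc m (c + a) b else 0.
  by case: a => [|a] /=; rewrite ?mul0r // mul1r (V_w2 _ _ _ hm).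
have -> : Tp (cder true (dlt m)) (w2 a b c) =
    if c is c'.+1 then 2%:R * Pc m (c + a) b else 0.
  case: c => [|c]; first by rewrite w2_r0 Tp_rcons mul0r.
  by rewrite w2_rS Tp_rcons mul1r (V_w2 _ _ _ hm) addSnnS.
have -> : mulA (P m) X (w2 a b c) = if c is c'.+1 then 0 else Pc m a b.
  case: c => [|c]; first by rewrite w2_r0 /X mulA_letter_r mul1r P_w1.
  by rewrite w2_rS /X mulA_letter_r mul0r.
have -> : mulA X (P m) (w2 a b c) = if a is a'.+1 then 0 else Pc m b c.
  by case: a => [|a]; rewrite /X mulA_letter_l /= ?mul0r // mul1r P_w1.
case: a => [|a]; case: c => [|c] /=.
- by rewrite subrr (Pc_sym _ _ hm) subrr mulr0.
- by rewrite addn0 (Pc_sym _ _ hm); ring.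
- by rewrite add0n; ring.
- ring.
Qed.

Lemma ady_inj (r : A) : (forall w, ady r w = 0) ->
  (forall w, count_mem false w = 0%nat -> r w = 0) -> forall w, r w = 0.
Proof.
move=> hA h0.
have S1 : forall w, r (rcons w false) = 0.
  move=> w; have := hA (true :: rcons w false).
  by rewrite ady_HT -rcons_cons Tp_rcons /= mul1r mul0r subr0.
have S2 : forall w, r (rcons w true) = r (true :: w).
  move=> w; have := hA (true :: rcons w true).
  rewrite ady_HT -{2}rcons_cons Tp_rcons /= !mul1r => /eqP.
  by rewrite subr_eq0 => /eqP.
have S3 : forall k u, r (u ++ yn k) = r (yn k ++ u).
  elim=> [|k IH] u; first by rewrite cats0.
  rewrite yn_rcons -rcons_cat S2 -cat_cons IH.
  by rewrite -cat1s catA cats1 -yn_rcons.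
have D : forall w, count_mem false w = 0%nat \/
    exists u k, w = rcons u false ++ yn k.
  elim/last_ind => [|w d IH]; first by left.
  case: d.
    case: IH => [h|[u [k ->]]].
      by left; rewrite cnt_rcons h.
    by right; exists u, k.+1; rewrite yn_rcons rcons_cat.
  by right; exists w, 0%nat; rewrite cats0.
move=> w; case: (D w) => [h|[u [k ->]]]; first exact: h0.
by rewrite S3 -rcons_cat S1.
Qed.

Lemma P_S j : P j.+1 = ady (P j). Proof. by []. Qed.

Lemma ady_lin k (F : 'I_k -> A) (cf : 'I_k -> R) w :
  ady (fun u => \sum_(i < k) cf i * F i u) w = \sum_(i < k) cf i * ady (F i) w.
Proof.
rewrite ady_HT; under eq_bigr => i _ do rewrite ady_HT.
case: w => [|d w] /=.
  by rewrite big1 => [|i _]; ring.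
rewrite !mulr_sumr -sumrB; apply: eq_bigr => i _.
by rewrite mulrBr; congr (_ - _); rewrite mulrCA.
Qed.

Definition Ub m : A := fun w => \sum_(i < m) (-1)^+i * brA (P (m.-1 - i)) (P i) w.

Lemma brA_anti p q w : brA p q w = - brA q p w.
Proof. by rewrite /brA /addA /oppA opprD opprK addrC. Qed.

Lemma AU m : ~~ odd m -> forall w, ady (Ub m) w = 2%:R * brA (P m) X w.
Proof.
move=> hm w; rewrite /Ub.
rewrite (ady_lin (fun i : 'I_m => brA (P (m.-1 - i)) (P i)) (fun i => (-1)^+i)).
set g := fun k : nat => (-1)^+k * brA (P (m - k)) (P k) w.
rewrite (eq_bigr (fun i : 'I_m => g i - g i.+1)); last first.
  move=> [i hi] _ /=; rewrite ady_br /addA -!P_S /g.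
  have -> : (subn m.-1 i).+1 = subn m i by lia.
  have -> : subn m i.+1 = subn m.-1 i by lia.
  by rewrite exprS; ring.
rewrite -(big_mkord xpredT (fun i => g i - g i.+1)).
rewrite (telescope_sumr_eq (fun k => - g k)) // => [|k _]; last by ring.
rewrite /g subn0 subnn -signr_odd (negbTE hm) expr0 /= !mul1r.
by rewrite (brA_anti X); ring.
Qed.

Lemma inL_P j : inL (P j).
Proof. elim: j => [|j IH]; [exact: L_x | exact: (L_br L_y IH)]. Qed.

Lemma inL_sum k (F : 'I_k -> A) : (forall i, inL (F i)) ->
  inL (fun w => \sum_(i < k) F i w).
Proof.
elim: k F => [|k IH] F hF.
  by apply: (L_ext (L_scale 0 L_x)) => w; rewrite /scaleA big_ord0 mul0r.
apply: (L_ext (L_add (IH (fun i => F (widen_ord (leqnSn k) i)) _) (hF ord_max))).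
  by move=> i; exact: hF.
by move=> w; rewrite /addA big_ord_recr.
Qed.

Lemma inL_Ub m : inL (Ub m).
Proof.
exact: (@inL_sum m (fun i : 'I_m => scaleA ((-1)^+i) (brA (P (m.-1 - i)) (P i)))
  (fun i => L_scale _ (L_br (inL_P _) (inL_P _)))).
Qed.

Lemma ady_sub (p q : A) w : ady (fun u => p u - q u) w = ady p w - ady q w.
Proof. rewrite !ady_HT; case: w => [|d w] /=; ring. Qed.

Lemma mulA_cnt0 (p q : A) w : (forall u, count_mem false u = 0%nat -> p u = 0) ->
  count_mem false w = 0%nat -> mulA p q w = 0.
Proof.
move=> hp hw; rewrite /mulA big1 // => i _.
have E := count_cat (pred1 false) (take i w) (drop i w).
rewrite cat_take_drop hw in E.
rewrite hp ?mul0r //; by move: E => /esym /eqP; rewrite addn_eq0 => /andP [/eqP].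
Qed.

Lemma V_Ub m : ~~ odd m -> cder true (dlt m) = Ub m.
Proof.
move=> hm; apply: functional_extensionality => w.
apply/eqP; rewrite -subr_eq0; apply/eqP; move: w.
apply: (ady_inj (r := fun w => cder true (dlt m) w - Ub m w)).
  by move=> w; rewrite ady_sub (AV hm) (AU hm) /scaleA subrr.
move=> w hw; rewrite V_cnt ?hw // /Ub big1 ?subrr // => i _.
rewrite /brA /addA /oppA !mulA_cnt0 ?oppr0 ?addr0 ?mulr0 // => u hu;
  by rewrite P_cnt // hu.
Qed.

Lemma letter_nil c : letter c [::] = 0. Proof. by []. Qed.
Lemma letter_long c a b z : letter c [:: a, b & z] = 0.
Proof. by rewrite /letter /= eqseq_cons andbF. Qed.

Lemma brXY_size z : size z != 2%nat -> brA X Y z = 0.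
Proof.
move=> hz; rewrite /brA /addA /oppA /X /Y !mulA_letter_l.
case: z hz => [|d [|e [|f z]]] //= _; rewrite ?subrr //.
- by rewrite !letter_nil !mulr0 subrr.
- by rewrite !letter_long !mulr0 subrr.
Qed.

Lemma brXY2 d e : brA X Y [:: d; e] =
  (d == false)%:R * (e == true)%:R - (d == true)%:R * (e == false)%:R.
Proof. by rewrite /brA /addA /oppA /X /Y !mulA_letter_l /letter /= !eqseq_cons !andbT. Qed.

Lemma der_brXY ux uy w :
  der_ext ux uy (brA X Y) w = brA ux Y w + brA X uy w.
Proof.
rewrite /der_ext.
case: w => [|d w].
  rewrite big_ord_recl big_ord0 /= big_ord_recl big_ord0 /= big1 => [|c _].
    rewrite /brA /addA /oppA /X /Y mulA_letter_r0 mulA_letter_l mulA_letter_l.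
    by rewrite mulA_letter_r0 /=; ring.
  by rewrite brXY_size ?mul0r.
rewrite /= (big_ord_recl (size w).+1) (big_ord_recl (size w)).
rewrite [X in _ + (_ + X)]big1 ?addr0; last first.
  move=> i _; rewrite big1 // => [[j hj]] _ /=; rewrite big1 // => c _.
  rewrite brXY_size ?mul0r //.
  have -> : bump 0 i = i.+1 by rewrite /bump leq0n add1n.
  rewrite /= size_cat /= add0n size_takel; first by rewrite addnS.
  exact: ltn_ord.
rewrite /= subn0.
have -> : subn (size w).+1 (bump 0 0) = size w by rewrite /bump /= subn1.
rewrite !add0n !drop0 !take0 /=.
rewrite big_ord_recr /= drop_oversize //.
rewrite [X in _ + X + _]big1 ?addr0; last by move=> c _; rewrite brXY_size ?mul0r.
rewrite [X in X + _]big_ord_recr [X in _ + X]big_ord_recr /=.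
rewrite [X in X + _ + _]big1 ?add0r; last first.
  move=> [j hj] _; apply: big1 => c _; rewrite brXY_size ?mul0r //=.
  rewrite add0n size_drop /=; lia.
rewrite [X in _ + (X + _)]big1 ?add0r; last first.
  move=> [j hj] _; apply: big1 => c _; rewrite brXY_size ?mul0r //=.
  rewrite add0n size_drop; lia.
rewrite !add0n drop_size take_size.
have -> : drop (size w) (d :: w) = [:: last d w].
  by rewrite lastI -cats1 drop_size_cat // size_belast.
have -> : take (size w) (d :: w) = belast d w.
  by rewrite lastI -cats1 take_size_cat // size_belast.
rewrite !big_bool !brXY2 /brA /addA /oppA /X /Y mulA_letter_r' !mulA_letter_l mulA_letter_r'.
case: d; case: (last _ _) => /=; ring.
Qed.

Definition E1 (g : nat -> nat -> R) : A := fun w =>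
  if count_mem false w == 1%nat then g (index false w) (subn (size w) (index false w).+1)
  else 0.
Lemma E1_w1 g a b : E1 g (w1 a b) = g a b.
Proof.
rewrite /E1 cnt_w1 eqxx size_w1 /w1 index_cat.
have -> : (false \in yn a) = false by rewrite /yn mem_nseq andbF.
by rewrite /= addn0 size_yn subSS addKn.
Qed.
Lemma E1_cnt g w : count_mem false w != 1%nat -> E1 g w = 0.
Proof. by rewrite /E1 => /negbTE ->. Qed.

Definition gc m a b : R :=
  if (a + b).+2 == m then 2%:R + 2%:R * ((-1)^+b * ('C(m, b.+1))%:R) else 0.

Lemma div_scalar m a b : ~~ odd m ->
  2%:R * Pc m a.+1 b - 2%:R * Pc m a b.+1 =
  (if a is a'.+1 then gc m a' b else 0) - (if b is b'.+1 then gc m a b' else 0).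
Proof.
move=> hm; rewrite /Pc /gc.
case: a => [|a]; case: b => [|b]; rewrite ?addn0 ?add0n ?addSn ?addnS.
- case: eqP => [E|_]; first by rewrite -E in hm.
  by rewrite !mulr0 subrr.
- rewrite add0n; case: eqP => [E|_] /=; last ring.
  have hb : (-1) ^+ b = 1 :> R.
    by rewrite -signr_odd; move: hm; rewrite -E /= negbK => /negbTE ->.
  rewrite -E !exprS hb binn; ring.
- rewrite addn0; case: eqP => [E|_] /=; last ring.
  rewrite expr0 expr1 bin0; ring.
- case: eqP => [E|_] /=; last ring.
  rewrite !exprS; ring.
Qed.

Definition Gd m := E1 (gc m).

Lemma div_eq m : ~~ odd m ->
  divA (uGx (dlt m)) (uGy (dlt m)) = brA Y (Gd m).
Proof.
move=> hm; apply: functional_extensionality => v.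
rewrite /divA /addA /dL /uGx /uGy /oppA /lx /ly (cx_eq hm) /scaleA.
rewrite -/(ady (Gd m)) ady_HT.
case: (eqVneq (count_mem false v) 1%nat) => h; last first.
  have hG : forall u, count_mem false u != 1%nat -> Gd m u = 0.
    by move=> u hu; rewrite /Gd E1_cnt.
  rewrite (Hp_cnt hG h) (Tp_cnt hG h) V_cnt ?P_cnt ?cnt_rcons ?addn0 ?addn1 //.
    ring.
have [a [b ->]] := dec1 h.
rewrite -w2_r0 -w1_rS (V_w2 _ _ _ hm) P_w1 add0n.
have -> : Hp (Gd m) (w1 a b) = if a is a'.+1 then gc m a' b else 0.
  by case: a => [|a] /=; rewrite ?mul0r // mul1r /Gd E1_w1.
have -> : Tp (Gd m) (w1 a b) = if b is b'.+1 then gc m a b' else 0.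
  case: b => [|b]; first by rewrite w1_r0 Tp_rcons mul0r.
  by rewrite w1_rS Tp_rcons mul1r /Gd E1_w1.
exact: div_scalar.
Qed.

Fixpoint allw d : seq (seq bool) :=
  if d is d'.+1 then [seq true :: u | u <- allw d'] ++ [seq false :: u | u <- allw d']
  else [:: [::]].
Lemma allw_mem w : w \in allw (size w).
Proof.
elim: w => [|[] w IH] //=; rewrite mem_cat.
  by rewrite (map_f (fun u => true :: u) IH).
by rewrite (map_f (fun u => false :: u) IH) orbT.
Qed.
Lemma is_poly_size d (p : A) : (forall w, size w != d -> p w = 0) -> is_poly p.
Proof.
move=> hp; exists (allw d) => w hw; apply: hp; apply: contra hw => /eqP <-.
exact: allw_mem.
Qed.

Lemma is_poly_Y : is_poly Y.
Proof.
exists [:: [:: true]] => w; rewrite mem_seq1 /Y /letter /ly => /negbTE -> //.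
Qed.

Lemma Gd_size m w : (size w).+1 != m -> Gd m w = 0.
Proof.
move=> hw; rewrite /Gd; case: (eqVneq (count_mem false w) 1%nat) => h.
  have [a [b E]] := dec1 h; rewrite E E1_w1 /gc.
  move: hw; rewrite E size_w1 => /negbTE -> //.
by rewrite E1_cnt.
Qed.

Lemma is_poly_Gd m : is_poly (Gd m).
Proof.
apply: (is_poly_size (d := m.-1)) => w hw; apply: Gd_size.
by apply: contra hw => /eqP <-.
Qed.

Lemma is_poly_brYG m : is_poly (brA Y (Gd m)).
Proof.
apply: (is_poly_size (d := m)) => w hw; rewrite -/(ady (Gd m)) ady_HT.
case: w hw => [|d w] hw /=; first by rewrite subrr.
by rewrite !Gd_size ?size_belast ?mulr0 ?subrr.
Qed.

Lemma tr_div m : ~~ odd m -> tr_eq0 (divA (uGx (dlt m)) (uGy (dlt m))).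
Proof.
move=> hm; rewrite (div_eq hm).
exists [:: (Y, Gd m)]; split; last split.
- move=> i; rewrite /= ltnS leqn0 => /eqP -> /=.
  by split; [exact: is_poly_Y | exact: is_poly_Gd].
- exact: is_poly_brYG.
- by move=> w; rewrite big_ord1.
Qed.

Theorem mainTheorem7 (n : nat) : in_krv (uGx (delta n)) (uGy (delta n)).
Proof.
have hm : ~~ odd (2 * n)%nat by rewrite mul2n odd_double.
have -> : delta n = dlt (2 * n) by [].
rewrite /in_krv /uGx /uGy /lx /ly.
split.
- by rewrite (V_Ub hm); exact: inL_Ub.
- apply: (L_ext (L_scale (-2%:R) (inL_P (2 * n)))) => w.
  by rewrite (cx_eq hm) /scaleA /oppA mulNr.
- move=> w; rewrite der_brXY (brA_anti _ Y) -/(ady _) (AV hm) /scaleA.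
  rewrite (cx_eq hm) /brA /addA mulA_oppr mulA_oppl mulA_scaler mulA_scalel.
  rewrite /oppA /scaleA; ring.
- exact: (tr_div hm).
Qed.
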